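(* Let $\hbar,\alpha,g_0,\kappa_0,b_0>0$ and $\lambda>2b_0$, and let $\Delta\tau=\Delta\tau_O=\frac{4\lambda\kappa_0}{\alpha g_0(\lambda-2b_0)}$, $K=\frac{2\lambda\kappa_0}{\alpha g_0\Delta\tau}$, $C=\frac{\alpha g_0\Delta\tau}{2\lambda\kappa_0}$. Define the pointer states by their position kernels $$\rho_\pm(b,b')=\frac{C}{b_0\pi}\,\frac{\sin[K(b-b')]}{b-b'}\,\frac{\sin(b_0b)}{b}\,\frac{\sin(b_0b')}{b'}\,e^{\pm\frac{i\lambda}{2}(b-b')},$$ and their momentum densities $\langle s|\rho_\pm|s\rangle=\frac{1}{2\pi\hbar}\int\!\!\int e^{-is(b-b')/\hbar}\rho_\pm(b,b')\,db\,db'$. Then $\langle s|\rho_-|s\rangle=\langle -s|\rho_+|-s\rangle$, and $\langle s|\rho_+|s\rangle$ vanishes outside $[0,\lambda\hbar]$ and is given on $[0,\lambda\hbar]$ as follows: (i) if $\lambda>4b_0$: $\frac{s}{2b_0\hbar^2(\lambda-2b_0)}$ on $[0,2b_0\hbar]$, $\frac{1}{(\lambda-2b_0)\hbar}$ on $[2b_0\hbar,(\lambda-2b_0)\hbar]$, $\frac{\lambda-s/\hbar}{2b_0\hbar(\lambda-2b_0)}$ on $[(\lambda-2b_0)\hbar,\lambda\hbar]$; (ii) if $2b_0<\lambda<4b_0$: $\frac{s}{2b_0\hbar^2(\lambda-2b_0)}$ on $[0,(\lambda-2b_0)\hbar]$, $\frac{1}{2b_0\hbar}$ on $[(\lambda-2b_0)\hbar,2b_0\hbar]$,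 $\frac{\lambda-s/\hbar}{2b_0\hbar(\lambda-2b_0)}$ on $[2b_0\hbar,\lambda\hbar]$; (iii) if $\lambda=4b_0$: $\frac{4s}{\lambda^2\hbar^2}$ on $[0,\lambda\hbar/2]$ and $\frac{4(\lambda-s/\hbar)}{\lambda^2\hbar}$ on $[\lambda\hbar/2,\lambda\hbar]$. In particular the momentum densities of $\rho_+$ and $\rho_-$ have supports $[0,\lambda\hbar]$ and $[-\lambda\hbar,0]$, which do not overlap except at $s=0$.
   Context: $\rho_\pm$ are the pointer states in the measurement of $S_z$ of a spin-1/2 particle with probe initial state $\frac{1}{\sqrt{\kappa_0\pi}}\frac{\sin(\kappa_0 q)}{q}$ and pointer initial state $\frac{1}{\sqrt{b_0\pi}}\frac{\sin(b_0 b)}{b}$; $s$ is the pointer momentum variable, with $\langle s|b\rangle=e^{isb/\hbar}/\sqrt{2\pi\hbar}$. *)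

(* Defs.v *)
From Stdlib Require Import Reals Lra.
Open Scope R_scope.

Definition sinq (a x : R) : R :=
  if Req_EM_T x 0 then a else sin (a * x) / x.

(* Minimal complex arithmetic on pairs (re, im). *)
Definition Cx : Type := (R * R)%type.
Definition Cmul (z w : Cx) : Cx :=
  (fst z * fst w - snd z * snd w, fst z * snd w + snd z * fst w).
Definition Cscal (r : R) (z : Cx) : Cx := (r * fst z, r * snd z).
Definition Cexpi (t : R) : Cx := (cos t, sin t).

Definition RInt_val (f : R -> R) (a b v : R) : Prop :=
  exists pr : Riemann_integrable f a b, RiemannInt pr = v.

Definition square_int (F : R -> R -> R) (r v : R) : Prop :=
  exists g : R -> R,
    (forall b, RInt_val (fun b' => F b b') (- r) r (g b)) /\
    RInt_val g (- r) r v.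

(* Improper double integral over R^2 (limit of integrals over growing
   squares; the integrands considered are absolutely integrable). *)
Definition double_int_R2 (F : R -> R -> R) (l : R) : Prop :=
  exists V : R -> R,
    (forall r, 0 < r -> square_int F r (V r)) /\
    (forall eps, 0 < eps -> exists M, forall r, M <= r -> Rabs (V r - l) < eps).

Definition dtau (alpha g0 kappa0 b0 lambda : R) : R :=
  4 * lambda * kappa0 / (alpha * g0 * (lambda - 2 * b0)).
Definition Kc (alpha g0 kappa0 b0 lambda : R) : R :=
  2 * lambda * kappa0 / (alpha * g0 * dtau alpha g0 kappa0 b0 lambda).
Definition Cc (alpha g0 kappa0 b0 lambda : R) : R :=
  alpha * g0 * dtau alpha g0 kappa0 b0 lambda / (2 * lambda * kappa0).

Definition rho (sgn alpha g0 kappa0 b0 lambda b b' : R) : Cx :=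
  Cscal (Cc alpha g0 kappa0 b0 lambda / (b0 * PI)
         * sinq (Kc alpha g0 kappa0 b0 lambda) (b - b')
         * sinq b0 b * sinq b0 b')
        (Cexpi (sgn * lambda / 2 * (b - b'))).

Definition mom_integrand (hbar sgn alpha g0 kappa0 b0 lambda s b b' : R) : Cx :=
  Cscal (/ (2 * PI * hbar))
        (Cmul (Cexpi (- s * (b - b') / hbar))
              (rho sgn alpha g0 kappa0 b0 lambda b b')).

(* <s|rho_sgn|s> = d  (complex value d + 0 i). *)
Definition mom_density (hbar sgn alpha g0 kappa0 b0 lambda s d : R) : Prop :=
  double_int_R2 (fun b b' => fst (mom_integrand hbar sgn alpha g0 kappa0 b0 lambda s b b')) d /\
  double_int_R2 (fun b b' => snd (mom_integrand hbar sgn alpha g0 kappa0 b0 lambda s b b')) 0.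

(* Main.v *)
Require Import Defs.
From Stdlib Require Import Reals Lra.
From Coquelicot Require Import Coquelicot.
Open Scope R_scope.


Lemma Rball_abs (x e y : R) : ball x e y <-> Rabs (y - x) < e.
Proof. split; intro H; exact H. Qed.

Lemma param_cont (f : R -> R -> R) (a b c : R) : a <= b ->
  (forall t, a <= t <= b -> continuity_2d_pt f t c) ->
  (forall p, ex_RInt (fun t => f t p) a b) ->
  continuous (fun p => RInt (fun t => f t p) a b) c.
Proof.
  intros Hab Hc Hex.
  apply filterlim_locally. intros eps.
  assert (He' : 0 < eps / (2 * (b - a + 1))).
  { apply Rdiv_lt_0_compat. apply cond_pos. lra. }
  destruct (uniform_continuity_2d_1d f a b c Hc (mkposreal _ He')) as [d Hd].
  exists d. intros p Hp. apply Rball_abs in Hp. apply Rball_abs.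
  simpl in Hd.
  rewrite <- (RInt_minus (fun t => f t p) (fun t => f t c)) by auto.
  apply Rle_lt_trans with ((b - a) * (eps / (2 * (b - a + 1)))).
  - apply abs_RInt_le_const; auto.
    + apply ex_RInt_minus; auto.
    + intros t Ht. left. unfold minus, plus, opp; simpl.
      pose proof (cond_pos d). apply Rabs_def2 in Hp. unfold minus, plus, opp in Hp; simpl in Hp.
      apply (Hd t c t p Ht); try (split; lra); auto.
      all: rewrite ?Rminus_eq_0, ?Rabs_R0; try lra.
  - pose proof (cond_pos eps).
    apply Rle_lt_trans with ((b - a + 1) * (eps / (2 * (b - a + 1)))).
    + apply Rmult_le_compat_r; lra.
    + field_simplify; lra.
Qed.

Lemma ex_RInt_cont (f : R -> R) a b :
  (forall z, Rmin a b <= z <= Rmax a b -> continuity_pt f z) -> ex_RInt f a b.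
Proof.
  intros H. apply (@ex_RInt_continuous R_CompleteNormedModule).
  intros; apply continuity_pt_filterlim; auto.
Qed.

Ltac cont1d := repeat first [ apply continuity_pt_mult | apply continuity_pt_plus
  | apply continuity_pt_minus | apply continuity_pt_opp | apply continuity_pt_id
  | (apply continuity_pt_const; intros ? ?; reflexivity)
  | apply (continuity_pt_comp _ cos); [|apply continuity_cos]
  | apply (continuity_pt_comp _ sin); [|apply continuity_sin] ].

Ltac cont2d := repeat first [ apply continuity_2d_pt_mult | apply continuity_2d_pt_plus
  | apply continuity_2d_pt_minus | apply continuity_2d_pt_opp
  | apply continuity_2d_pt_id1 | apply continuity_2d_pt_id2 | apply continuity_2d_pt_const
  | apply (continuity_1d_2d_pt_comp cos); [apply continuity_cos|]
  | apply (continuity_1d_2d_pt_comp sin); [apply continuity_sin|] ].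

Lemma sinq_int (c x : R) : sinq c x = RInt (fun s => c * cos (c * x * s)) 0 1.
Proof.
  unfold sinq. destruct (Req_EM_T x 0) as [->|Hx].
  - rewrite (RInt_ext _ (fun _ => c)).
    + rewrite RInt_const. unfold scal; simpl; unfold mult; simpl. lra.
    + intros s _. rewrite Rmult_0_r, Rmult_0_l, cos_0, Rmult_1_r. reflexivity.
  - symmetry. apply is_RInt_unique.
    assert (H : is_RInt (fun s => c * cos (c * x * s)) 0 1
        (minus ((fun s => sin (c * x * s) / x) 1) ((fun s => sin (c * x * s) / x) 0))).
    { apply (is_RInt_derive (fun s => sin (c * x * s) / x) (fun s => c * cos (c * x * s))).
      * intros s _. auto_derive. auto. field. auto.
      * intros s _. apply continuity_pt_filterlim.
        apply continuity_pt_mult. apply continuity_pt_const. intros u v; auto.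
        apply (continuity_pt_comp (fun s => c * x * s) cos).
        apply continuity_pt_mult. apply continuity_pt_const. intros u v; auto.
        apply continuity_pt_id. apply continuity_cos. }
    simpl in H. unfold minus, plus, opp in H; simpl in H.
    rewrite Rmult_0_r, sin_0, Rmult_1_r in H.
    replace (sin (c * x) / x) with (sin (c * x) / x + - (0 / x)) by (field; auto). exact H.
Qed.

Lemma sinq_cont2d (c x0 : R) : forall t, continuity_2d_pt (fun t p => c * cos (c * p * t)) t x0.
Proof. intros t. cont2d. Qed.

Lemma ex_RInt_cos_param (c p : R) : ex_RInt (fun t => c * cos (c * p * t)) 0 1.
Proof. apply ex_RInt_cont. intros z _. cont1d. Qed.

Lemma sinq_continuous (c x : R) : continuous (sinq c) x.
Proof.
  apply (continuous_ext (fun p => RInt (fun t => c * cos (c * p * t)) 0 1)).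
  - intros p. symmetry. apply sinq_int.
  - apply param_cont. lra. intros t _. apply sinq_cont2d. intros p. apply ex_RInt_cos_param.
Qed.

Lemma sinq_contpt (c x : R) : continuity_pt (sinq c) x.
Proof. apply continuity_pt_filterlim. apply sinq_continuous. Qed.

Lemma sinq_bound (c x : R) : Rabs (sinq c x) <= Rabs c.
Proof.
  rewrite sinq_int.
  replace (Rabs c) with ((1 - 0) * Rabs c) by ring.
  apply abs_RInt_le_const. lra. apply ex_RInt_cos_param.
  intros t _. rewrite Rabs_mult. rewrite <- (Rmult_1_r (Rabs c)) at 2.
  apply Rmult_le_compat_l. apply Rabs_pos. apply Rabs_le. apply COS_bound.
Qed.

Lemma sinq_even (c x : R) : sinq c (- x) = sinq c x.
Proof.
  unfold sinq. destruct (Req_EM_T (-x) 0); destruct (Req_EM_T x 0); try lra.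
  replace (c * - x) with (- (c * x)) by ring. rewrite sin_neg. field. auto.
Qed.

Lemma sinq_oppc (c x : R) : sinq (- c) x = - sinq c x.
Proof.
  unfold sinq. destruct (Req_EM_T x 0); auto.
  replace (- c * x) with (- (c * x)) by ring. rewrite sin_neg. field. auto.
Qed.

Lemma sinq_scale (c x : R) : sinq c x = c * sinq 1 (c * x).
Proof.
  unfold sinq. destruct (Req_EM_T x 0) as [->|Hx].
  - rewrite Rmult_0_r. destruct (Req_EM_T 0 0); [ring|lra].
  - destruct (Req_EM_T (c * x) 0) as [H|H].
    + destruct (Rmult_integral _ _ H) as [->|]; [|lra]. rewrite Rmult_0_l, sin_0. field. auto.
    + rewrite Rmult_1_l. field. split; auto. intros ->. apply H; ring.
Qed.

Lemma sinq_0c (x : R) : sinq 0 x = 0.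
Proof. unfold sinq. destruct (Req_EM_T x 0); auto. rewrite Rmult_0_l, sin_0. field. auto. Qed.

Lemma sinq_derive_c (c x : R) : is_derive (fun a => sinq a x) c (cos (c * x)).
Proof.
  unfold sinq. destruct (Req_EM_T x 0) as [->|Hx].
  - rewrite Rmult_0_r, cos_0. apply (@is_derive_id R_AbsRing).
  - auto_derive. auto. field. auto.
Qed.

Lemma RInt_extR (f g : R -> R) a b :
  (forall x, Rmin a b < x < Rmax a b -> f x = g x) -> RInt f a b = RInt g a b.
Proof. apply RInt_ext. Qed.
Lemma RInt_plusR (f g : R -> R) a b : ex_RInt f a b -> ex_RInt g a b ->
  RInt (fun x => f x + g x) a b = RInt f a b + RInt g a b.
Proof. intros. apply (RInt_plus f g); auto. Qed.
Lemma RInt_minusR (f g : R -> R) a b : ex_RInt f a b -> ex_RInt g a b ->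
  RInt (fun x => f x - g x) a b = RInt f a b - RInt g a b.
Proof. intros. apply (RInt_minus f g); auto. Qed.
Lemma RInt_scalR (f : R -> R) c a b : ex_RInt f a b ->
  RInt (fun x => c * f x) a b = c * RInt f a b.
Proof. intros. apply (RInt_scal f a b c); auto. Qed.
Lemma RInt_oppR (f : R -> R) a b : ex_RInt f a b ->
  RInt (fun x => - f x) a b = - RInt f a b.
Proof. intros. apply (RInt_opp f); auto. Qed.

Lemma abs_split x a : Rabs x <= a -> - a <= x <= a.
Proof. unfold Rabs; destruct (Rcase_abs x); intros; lra. Qed.
Lemma abs_intro x a : - a <= x <= a -> Rabs x <= a.
Proof. unfold Rabs; destruct (Rcase_abs x); intros; lra. Qed.

Lemma ex_RInt_scalR (f : R -> R) c a b : ex_RInt f a b -> ex_RInt (fun x => c * f x) a b.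
Proof. intros. apply (@ex_RInt_scal R_NormedModule f a b c); auto. Qed.
Lemma ex_RInt_plusR (f g : R -> R) a b : ex_RInt f a b -> ex_RInt g a b ->
  ex_RInt (fun x => f x + g x) a b.
Proof. intros. apply (@ex_RInt_plus R_NormedModule f g); auto. Qed.

Ltac toR := match goal with |- ?a = ?b => change (@eq R a b) end.


Lemma sin_lb_eq a : sin_lb a = a - a^3/6 + a^5/120 - a^7/5040.
Proof.
  unfold sin_lb, sin_approx, sin_term. cbn [sum_f_R0 Nat.mul Nat.add].
  rewrite !INR_IZR_INZ. cbn [Factorial.fact Nat.mul Nat.add Z.of_nat].
  change (Z.pos (PosDef.Pos.of_succ_nat 0)) with 1%Z.
  change (Z.pos (PosDef.Pos.of_succ_nat 5)) with 6%Z.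
  change (Z.pos (PosDef.Pos.of_succ_nat 119)) with 120%Z.
  change (Z.pos (PosDef.Pos.of_succ_nat 5039)) with 5040%Z.
  field.
Qed.

Lemma sin_bounds y : 0 <= y <= PI -> y - y^3/6 <= sin y <= y.
Proof.
  intros Hy. pose proof PI_4. destruct (SIN y) as [H1 H2]; try lra.
  rewrite sin_lb_eq in H1.
  assert (Hy2 : y * y <= 16) by nra.
  split.
  - assert (y^5/120 - y^7/5040 >= 0).
    { replace (y^5/120 - y^7/5040) with (y^5 * (42 - y*y) / 5040) by (field).
      apply Rle_ge. apply Rmult_le_pos; [|lra]. apply Rmult_le_pos; [|lra].
      apply pow_le; lra. }
    lra.
  - destruct (Req_dec y 0) as [->|Hy0]. rewrite sin_0; lra.
    left; apply sin_lt_x; lra.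
Qed.

Definition Si (x : R) : R := RInt (sinq 1) 0 x.

Lemma ex_RInt_sinq c a b : ex_RInt (sinq c) a b.
Proof. apply ex_RInt_cont. intros; apply sinq_contpt. Qed.

Lemma Si_chasles x y : Si y - Si x = RInt (sinq 1) x y.
Proof.
  unfold Si. rewrite <- (RInt_Chasles (sinq 1) 0 x y) by apply ex_RInt_sinq.
  unfold plus; simpl. ring.
Qed.

Lemma RInt_inv_sq x y : 0 < x <= y -> RInt (fun u => / (u * u)) x y = / x - / y.
Proof.
  intros Hxy. apply is_RInt_unique.
  assert (H : is_RInt (fun u => / (u * u)) x y (minus ((fun u => - / u) y) ((fun u => - / u) x))).
  { apply (is_RInt_derive (fun u => - / u) (fun u => / (u * u))).
    - intros u Hu. rewrite Rmin_left in Hu by lra. rewrite Rmax_right in Hu by lra.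
      auto_derive. lra. field. lra.
    - intros u Hu. rewrite Rmin_left in Hu by lra. rewrite Rmax_right in Hu by lra.
      apply continuity_pt_filterlim. apply continuity_pt_inv. cont1d.
      nra. }
  unfold minus, plus, opp in H; simpl in H. replace (/ x - / y) with (- / y + - - / x) by ring.
  exact H.
Qed.

Lemma Si_tail x y : 0 < x <= y -> Rabs (Si y - Si x) <= 2 / x.
Proof.
  intros Hxy. rewrite Si_chasles.
  set (Psi := fun u => - cos u / u).
  set (dPsi := fun u => sin u / u + cos u / (u * u)).
  set (g := fun u => cos u / (u * u)).
  assert (Hc1 : forall u, x <= u <= y -> continuity_pt g u).
  { intros u Hu. unfold g. apply continuity_pt_div. cont1d. cont1d. nra. }
  assert (Hc2 : forall u, x <= u <= y -> continuity_pt dPsi u).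
  { intros u Hu. unfold dPsi. apply continuity_pt_plus. apply continuity_pt_div; cont1d; lra.
    apply Hc1; auto. }
  assert (HmM : forall u, Rmin x y <= u <= Rmax x y -> x <= u <= y).
  { intros u. rewrite Rmin_left by lra. rewrite Rmax_right by lra. auto. }
  assert (Hex_g : ex_RInt g x y). { apply ex_RInt_cont. intros; apply Hc1; auto. }
  assert (Hex_d : ex_RInt dPsi x y). { apply ex_RInt_cont. intros; apply Hc2; auto. }
  rewrite (RInt_ext (sinq 1) (fun u => dPsi u - g u)).
  2:{ intros u Hu. rewrite Rmin_left in Hu by lra. rewrite Rmax_right in Hu by lra.
      unfold sinq, dPsi, g. destruct (Req_EM_T u 0); [lra|]. rewrite Rmult_1_l. lra. }
  rewrite (RInt_minus dPsi g) by auto.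
  assert (HP : RInt dPsi x y = Psi y - Psi x).
  { apply is_RInt_unique.
    assert (H : is_RInt dPsi x y (minus (Psi y) (Psi x))).
    { apply (is_RInt_derive Psi dPsi).
      - intros u Hu. apply HmM in Hu. unfold Psi, dPsi. auto_derive. lra. field. lra.
      - intros u Hu. apply continuity_pt_filterlim. apply Hc2; auto. }
    exact H. }
  rewrite HP. unfold minus, plus, opp; simpl.
  assert (Hg : Rabs (RInt g x y) <= / x - / y).
  { rewrite <- RInt_inv_sq by lra.
    eapply Rle_trans. apply abs_RInt_le; [lra|auto].
    apply RInt_le; [lra| |apply ex_RInt_cont; intros u Hu; apply HmM in Hu; apply continuity_pt_inv; [cont1d|nra] |].
    - apply ex_RInt_cont. intros u Hu. apply HmM in Hu.
      apply (continuity_pt_comp g Rabs). apply Hc1; auto. apply Rcontinuity_abs.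
    - intros u Hu. unfold g. rewrite Rabs_div by nra.
      rewrite (Rabs_right (u*u)) by nra. unfold Rdiv.
      rewrite <- (Rmult_1_l (/ (u*u))) at 2. apply Rmult_le_compat_r.
      left; apply Rinv_0_lt_compat; nra. apply Rabs_le. apply COS_bound. }
  assert (HPs : Rabs (Psi y - Psi x) <= / y + / x).
  { assert (Hcb : forall t, 0 < t -> - / t <= cos t / t <= / t).
    { intros t Ht. pose proof (COS_bound t). unfold Rdiv.
      pose proof (Rinv_0_lt_compat t Ht). split; nra. }
    unfold Psi. apply Rabs_le.
    destruct (Hcb x) as [A1 A2]; [lra|]. destruct (Hcb y) as [B1 B2]; [lra|].
    replace (- cos y / y - - cos x / x) with (cos x / x - cos y / y) by (field; lra).
    split; lra. }
  eapply Rle_trans. apply Rabs_triang. rewrite Rabs_Ropp.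
  replace (2 / x) with ((/ y + / x) + (/ x - / y)) by (field; lra). lra.
Qed.

Fixpoint Dk (n : nat) (x : R) : R :=
  match n with O => 1 | S m => Dk m x + 2 * cos (INR (S m) * x) end.
Fixpoint Ak (n : nat) (x : R) : R :=
  match n with O => x | S m => Ak m x + 2 * sin (INR (S m) * x) / INR (S m) end.

Lemma Ak_derive n x : is_derive (Ak n) x (Dk n x).
Proof.
  induction n; cbn [Ak Dk].
  - apply (@is_derive_id R_AbsRing).
  - apply (is_derive_plus (Ak n) (fun x => 2 * sin (INR (S n) * x) / INR (S n))); auto.
    assert (0 < INR (S n)) by apply lt_0_INR, Nat.lt_0_succ.
    revert H. generalize (INR (S n)). intros k Hk.
    auto_derive. auto. field. lra.
Qed.

Lemma Dk_cont n x : continuity_pt (Dk n) x.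
Proof. induction n; cbn [Dk]. cont1d. apply continuity_pt_plus; auto. cont1d. Qed.

Lemma sin_kPI n : sin (INR n * PI) = 0.
Proof. apply sin_eq_0_1. exists (Z.of_nat n). rewrite <- INR_IZR_INZ. auto. Qed.

Lemma Ak_PI n : Ak n PI = PI.
Proof. induction n; cbn [Ak]; auto. rewrite IHn, sin_kPI. unfold Rdiv. ring. Qed.
Lemma Ak_0 n : Ak n 0 = 0.
Proof. induction n; cbn [Ak]; auto. rewrite IHn, Rmult_0_r, sin_0. unfold Rdiv. ring. Qed.

Lemma RInt_Dk n : RInt (Dk n) 0 PI = PI.
Proof.
  apply is_RInt_unique.
  assert (H : is_RInt (Dk n) 0 PI (minus (Ak n PI) (Ak n 0))).
  { apply (is_RInt_derive (Ak n) (Dk n)).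
    - intros; apply Ak_derive.
    - intros; apply continuity_pt_filterlim, Dk_cont. }
  rewrite Ak_PI, Ak_0 in H. unfold minus, plus, opp in H; simpl in H.
  replace (PI + - 0) with PI in H by ring. exact H.
Qed.

Lemma Dk_sin n x : sin ((INR n + / 2) * x) = sin (x / 2) * Dk n x.
Proof.
  induction n; cbn [Dk].
  - cbn [INR]. rewrite Rmult_1_r. f_equal. field.
  - rewrite Rmult_plus_distr_l, <- IHn.
    replace ((INR (S n) + / 2) * x) with (INR (S n) * x + x / 2) by (rewrite S_INR; field).
    replace ((INR n + / 2) * x) with (INR (S n) * x - x / 2) by (rewrite S_INR; field).
    rewrite sin_plus, sin_minus. ring.
Qed.

Definition hh (x : R) : R := / sin (x / 2) - 2 / x.
Definition hp (x : R) : R := - (cos (x / 2) / 2) / (sin (x / 2) * sin (x / 2)) + 2 / (x * x).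

Lemma sin_half_pos x : 0 < x <= PI -> x / 6 <= sin (x / 2) /\ 0 < sin (x / 2).
Proof.
  intros Hx. pose proof PI_4. destruct (sin_bounds (x / 2)) as [H1 H2]. lra.
  assert (x / 2 - (x / 2) ^ 3 / 6 >= x / 6).
  { assert (x * x <= 16) by nra.
    replace (x / 2 - (x / 2) ^ 3 / 6) with (x / 6 + x * (16 - x * x) / 48) by field.
    assert (0 <= x * (16 - x * x)) by nra. lra. }
  split; lra.
Qed.

Lemma hh_bound x : 0 < x <= PI -> 0 <= hh x <= 1.
Proof.
  intros Hx. pose proof PI_4. set (y := x / 2).
  destruct (sin_bounds y) as [H1 H2]. unfold y; lra.
  destruct (sin_half_pos x Hx) as [_ Hs]. fold y in Hs.
  unfold hh. fold y. replace (2 / x) with (/ y) by (unfold y; field; lra).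
  assert (Hy : 0 < y <= 2) by (unfold y; lra).
  replace (/ sin y - / y) with ((y - sin y) / (y * sin y)) by (field; lra).
  split.
  - apply Rmult_le_pos. lra. left. apply Rinv_0_lt_compat. nra.
  - apply Rmult_le_reg_r with (y * sin y). nra.
    unfold Rdiv. rewrite Rmult_assoc, Rinv_l, Rmult_1_r by nra. rewrite Rmult_1_l.
    assert (y ^ 3 / 6 <= y * (y - y ^ 3 / 6)).
    { replace (y * (y - y ^ 3 / 6) - y ^ 3 / 6) with (y * y * (6 - y - y * y) / 6) by field.
      assert (0 <= y * y * (6 - y - y * y)). { apply Rmult_le_pos. nra. nra. } lra. }
    assert (y * (y - y ^ 3 / 6) <= y * sin y) by (apply Rmult_le_compat_l; lra).
    lra.
Qed.

Lemma hp_bound x e : 0 < e <= x -> x <= PI -> Rabs (hp x) <= 20 / (e * e).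
Proof.
  intros He Hx. destruct (sin_half_pos x) as [Hs1 Hs2]. lra.
  unfold hp.
  assert (Hc : Rabs (cos (x / 2) / 2) <= 1 / 2).
  { rewrite Rabs_div by lra. rewrite (Rabs_right 2) by lra. pose proof (COS_bound (x/2)).
    assert (Rabs (cos (x / 2)) <= 1) by (apply Rabs_le; lra). unfold Rdiv. lra. }
  assert (Hs : / (sin (x / 2) * sin (x / 2)) <= 36 / (e * e)).
  { replace (36 / (e * e)) with (/ ((e / 6) * (e / 6))) by (field; lra).
    apply Rinv_le_contravar. nra. apply Rmult_le_compat; lra. }
  assert (Hx2 : 2 / (x * x) <= 2 / (e * e)).
  { unfold Rdiv. apply Rmult_le_compat_l. lra. apply Rinv_le_contravar. nra. apply Rmult_le_compat; lra. }
  eapply Rle_trans. apply Rabs_triang.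
  rewrite Rabs_div by nra. rewrite (Rabs_right (sin _ * _)) by nra.
  rewrite (Rabs_right (2 / (x * x))) by (apply Rle_ge; unfold Rdiv; apply Rmult_le_pos; [lra|left; apply Rinv_0_lt_compat; nra]).
  rewrite Rabs_Ropp.
  assert (Rabs (cos (x / 2) / 2) / (sin (x / 2) * sin (x / 2)) <= 1/2 * (36 / (e * e))).
  { unfold Rdiv at 1. apply Rmult_le_compat; try lra. apply Rabs_pos.
    left; apply Rinv_0_lt_compat; nra. }
  replace (20 / (e * e)) with (1 / 2 * (36 / (e * e)) + 2 / (e * e)) by (field; lra).
  lra.
Qed.

Lemma hh_derive x : 0 < x <= PI -> is_derive hh x (hp x).
Proof.
  intros Hx. destruct (sin_half_pos x Hx) as [_ Hs].
  unfold hh, hp. auto_derive. split. lra. split. lra. auto. unfold Rdiv. field. split; lra.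
Qed.

Lemma RInt_sinq_lin c a b : RInt (sinq c) a b = RInt (sinq 1) (c * a) (c * b).
Proof.
  rewrite <- (Rplus_0_r (c * a)), <- (Rplus_0_r (c * b)).
  rewrite <- (RInt_comp_lin (sinq 1) c 0 a b) by apply ex_RInt_sinq.
  apply RInt_ext. intros x _. rewrite Rplus_0_r. rewrite sinq_scale. reflexivity.
Qed.

Definition Hn (n : nat) (x : R) : R := Dk n x - 2 * sinq (INR n + / 2) x.

Lemma Hn_cont n x : continuity_pt (Hn n) x.
Proof. unfold Hn. apply continuity_pt_minus. apply Dk_cont.
  apply continuity_pt_mult. cont1d. apply sinq_contpt. Qed.

Lemma ex_RInt_Hn n a b : ex_RInt (Hn n) a b.
Proof. apply ex_RInt_cont. intros; apply Hn_cont. Qed.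

Lemma RInt_Hn n : RInt (Hn n) 0 PI = PI - 2 * Si ((INR n + / 2) * PI).
Proof.
  unfold Hn. rewrite (RInt_minus (Dk n) (fun x => 2 * sinq (INR n + / 2) x)).
  2:{ apply ex_RInt_cont; intros; apply Dk_cont. }
  2:{ apply ex_RInt_cont; intros; apply continuity_pt_mult. cont1d. apply sinq_contpt. }
  rewrite RInt_Dk.
  assert (E : RInt (fun x => 2 * sinq (INR n + / 2) x) 0 PI = 2 * RInt (sinq (INR n + / 2)) 0 PI).
  { apply (RInt_scal (sinq (INR n + / 2)) 0 PI 2). apply ex_RInt_sinq. }
  rewrite E. rewrite RInt_sinq_lin, Rmult_0_r. unfold Si, minus, plus, opp, scal; simpl.
  unfold mult; simpl. ring.
Qed.

Lemma Dk_0 n : Dk n 0 = 1 + 2 * INR n.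
Proof. induction n; cbn [Dk]. simpl; ring. rewrite IHn, Rmult_0_r, cos_0, S_INR. ring. Qed.

Lemma Hn_eq n x : 0 < x <= PI -> Hn n x = sin ((INR n + / 2) * x) * hh x.
Proof.
  intros Hx. destruct (sin_half_pos x Hx) as [_ Hs].
  unfold Hn, hh, sinq. destruct (Req_EM_T x 0); [lra|].
  assert (Dk n x = sin ((INR n + / 2) * x) / sin (x / 2)) as ->.
  { rewrite Dk_sin. field. lra. }
  field. lra.
Qed.

Lemma Hn_bound n x : 0 <= x <= PI -> Rabs (Hn n x) <= 1.
Proof.
  intros Hx. destruct (Req_dec x 0) as [->|Hx0].
  - unfold Hn, sinq. destruct (Req_EM_T 0 0); [|lra]. rewrite Dk_0.
    replace (1 + 2 * INR n - 2 * (INR n + / 2)) with 0 by field. rewrite Rabs_R0. lra.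
  - rewrite Hn_eq by lra. rewrite Rabs_mult.
    destruct (hh_bound x) as [A B]; [lra|]. rewrite (Rabs_right (hh x)) by lra.
    pose proof (SIN_bound ((INR n + / 2) * x)).
    assert (Rabs (sin ((INR n + / 2) * x)) <= 1) by (apply Rabs_le; lra).
    pose proof (Rabs_pos (sin ((INR n + / 2) * x))). nra.
Qed.

Lemma hp_cont x : 0 < x <= PI -> continuity_pt hp x.
Proof.
  intros Hx. destruct (sin_half_pos x Hx) as [_ Hs]. unfold hp.
  apply continuity_pt_plus.
  - apply continuity_pt_div. apply continuity_pt_opp. apply continuity_pt_div.
    apply (continuity_pt_comp (fun x => x / 2) cos). unfold Rdiv. cont1d. apply continuity_cos.
    cont1d. lra.
    apply continuity_pt_mult; apply (continuity_pt_comp (fun x => x / 2) sin);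
      try (unfold Rdiv; cont1d); apply continuity_sin.
    nra.
  - apply continuity_pt_div. cont1d. cont1d. nra.
Qed.

Lemma RL_part n e : 0 < e <= PI ->
  Rabs (RInt (Hn n) e PI) <= (2 + 20 * PI / (e * e)) / (INR n + / 2).
Proof.
  intros He. set (N := INR n + / 2).
  assert (HN : 0 < N) by (unfold N; pose proof (pos_INR n); lra).
  set (Phi := fun x => (- cos (N * x) / N) * hh x).
  set (dPhi := fun x => sin (N * x) * hh x + (- cos (N * x) / N) * hp x).
  set (g := fun x => cos (N * x) * hp x / N).
  assert (HmM : forall u, Rmin e PI <= u <= Rmax e PI -> e <= u <= PI).
  { intros u. rewrite Rmin_left by lra. rewrite Rmax_right by lra. auto. }
  assert (Hhc : forall x, 0 < x <= PI -> continuity_pt hh x).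
  { intros x Hx. apply continuity_pt_filterlim. apply (@ex_derive_continuous R_AbsRing).
    eexists. apply hh_derive. auto. }
  assert (Hgc : forall x, e <= x <= PI -> continuity_pt g x).
  { intros x Hx. unfold g. apply continuity_pt_div; [|cont1d|lra].
    apply continuity_pt_mult. cont1d. apply hp_cont. lra. }
  assert (HdPc : forall x, e <= x <= PI -> continuity_pt dPhi x).
  { intros x Hx. unfold dPhi. apply continuity_pt_plus; apply continuity_pt_mult.
    cont1d. apply Hhc; lra. apply continuity_pt_div. cont1d. cont1d. lra. apply hp_cont; lra. }
  assert (Hder : forall x, e <= x <= PI -> is_derive Phi x (dPhi x)).
  { intros x Hx.
    assert (H1 : is_derive (fun t => - cos (N * t) / N) x (sin (N * x))).
    { auto_derive. auto. field. lra. }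
    pose proof (is_derive_mult _ _ x _ _ H1 (hh_derive x ltac:(lra)) ltac:(intros; apply Rmult_comm)) as H2.
    unfold Phi, dPhi. simpl in H2. unfold plus, mult in H2; simpl in H2. exact H2. }
  rewrite (RInt_extR (Hn n) (fun x => dPhi x + g x)).
  2:{ intros x Hx. rewrite Rmin_left in Hx by lra. rewrite Rmax_right in Hx by lra.
      rewrite Hn_eq by lra. unfold dPhi, g. fold N. field. lra. }
  rewrite (RInt_plusR dPhi g).
  2:{ apply ex_RInt_cont. intros; apply HdPc; auto. }
  2:{ apply ex_RInt_cont. intros; apply Hgc; auto. }
  assert (HP : RInt dPhi e PI = Phi PI - Phi e).
  { apply is_RInt_unique.
    apply (is_RInt_derive Phi dPhi); intros x Hx; apply HmM in Hx.
    apply Hder; auto. apply continuity_pt_filterlim, HdPc; auto. }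
  rewrite HP.
  assert (HPb : Rabs (Phi PI - Phi e) <= 2 / N).
  { unfold Phi.
    destruct (hh_bound PI) as [A1 A2]. pose proof PI_RGT_0; lra.
    destruct (hh_bound e) as [B1 B2]. lra.
    pose proof (COS_bound (N * PI)). pose proof (COS_bound (N * e)).
    apply Rabs_le.
    replace (- cos (N * PI) / N * hh PI - - cos (N * e) / N * hh e)
      with ((cos (N * e) * hh e - cos (N * PI) * hh PI) / N) by (field; lra).
    replace (- (2 / N)) with ((-2) / N) by (field; lra).
    split; unfold Rdiv; apply Rmult_le_compat_r; try (left; apply Rinv_0_lt_compat; lra); nra. }
  assert (Hgb : Rabs (RInt g e PI) <= (PI - e) * (20 / (e * e) / N)).
  { apply abs_RInt_le_const. lra. apply ex_RInt_cont. intros; apply Hgc; auto.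
    intros t Ht. unfold g. rewrite Rabs_div by lra. rewrite (Rabs_right N) by lra.
    unfold Rdiv. apply Rmult_le_compat_r. left; apply Rinv_0_lt_compat; lra.
    rewrite Rabs_mult. pose proof (hp_bound t e ltac:(lra) ltac:(lra)).
    pose proof (COS_bound (N * t)).
    assert (Rabs (cos (N * t)) <= 1) by (apply Rabs_le; lra).
    pose proof (Rabs_pos (cos (N * t))). pose proof (Rabs_pos (hp t)).
    unfold Rdiv in H. nra. }
  eapply Rle_trans. apply Rabs_triang.
  assert ((PI - e) * (20 / (e * e) / N) <= 20 * PI / (e * e) / N).
  { unfold Rdiv. rewrite <- Rmult_assoc. apply Rmult_le_compat_r. left; apply Rinv_0_lt_compat; lra.
    assert (0 < / (e * e)) by (apply Rinv_0_lt_compat; nra). nra. }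
  replace ((2 + 20 * PI / (e * e)) / N) with (2 / N + 20 * PI / (e * e) / N) by (field; lra).
  lra.
Qed.

Lemma dir_approx n e : 0 < e <= PI ->
  Rabs (PI - 2 * Si ((INR n + / 2) * PI)) <= e + (2 + 20 * PI / (e * e)) / (INR n + / 2).
Proof.
  intros He. rewrite <- RInt_Hn.
  rewrite <- (RInt_Chasles (Hn n) 0 e PI) by apply ex_RInt_Hn. unfold plus; simpl.
  eapply Rle_trans. apply Rabs_triang. apply Rplus_le_compat; [|apply RL_part; auto].
  replace e with ((e - 0) * 1) at 2 by ring.
  apply abs_RInt_le_const. lra. apply ex_RInt_Hn. intros t Ht. apply Hn_bound. lra.
Qed.

Lemma Si_lim x : 0 < x -> Rabs (Si x - PI / 2) <= 2 / x.
Proof.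
  intros Hx. apply Rle_plus_epsilon. intros eps Heps.
  pose proof PI_RGT_0 as HPI.
  set (e := Rmin eps PI).
  assert (He : 0 < e <= PI) by (unfold e; split; [apply Rmin_glb_lt; lra|apply Rmin_r]).
  assert (Hee : e <= eps) by apply Rmin_l.
  set (C := 2 + 20 * PI / (e * e)).
  assert (HC : 0 < C).
  { unfold C. assert (0 < 20 * PI / (e * e)). { apply Rdiv_lt_0_compat. lra. nra. } lra. }
  destruct (INR_archimed 1 (x / PI + C / eps)) as [n Hn]; [lra|].
  rewrite Rmult_1_r in Hn.
  set (N := INR n + / 2).
  assert (HN1 : x <= N * PI).
  { assert (x / PI < N). { unfold N. assert (0 < C / eps) by (apply Rdiv_lt_0_compat; lra). lra. }
    apply Rmult_lt_compat_r with (r := PI) in H; [|lra]. unfold Rdiv in H.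
    rewrite Rmult_assoc, Rinv_l, Rmult_1_r in H; lra. }
  assert (HN2 : C / N <= eps).
  { assert (C / eps < N). { unfold N. assert (0 <= x / PI) by (apply Rmult_le_pos; [lra|left; apply Rinv_0_lt_compat; lra]). lra. }
    assert (0 < N) by (unfold N; pose proof (pos_INR n); lra).
    apply Rmult_lt_compat_r with (r := eps) in H; [|lra]. unfold Rdiv in H.
    rewrite Rmult_assoc, Rinv_l, Rmult_1_r in H by lra.
    unfold Rdiv. apply Rmult_le_reg_r with N; auto.
    rewrite Rmult_assoc, Rinv_l, Rmult_1_r by lra. lra. }
  pose proof (dir_approx n e He) as HD. fold N C in HD.
  pose proof (Si_tail x (N * PI) (conj Hx HN1)) as HT.
  apply abs_split in HD. apply abs_split in HT. apply abs_intro. lra.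
Qed.

Lemma Si_odd x : Si (- x) = - Si x.
Proof.
  unfold Si.
  assert (H : is_RInt (sinq 1) (- 0) (- x) (RInt (sinq 1) 0 (- x))).
  { rewrite Ropp_0. apply (@RInt_correct R_CompleteNormedModule), ex_RInt_sinq. }
  apply is_RInt_comp_opp in H. apply (@is_RInt_unique R_CompleteNormedModule) in H.
  rewrite <- H. rewrite <- (RInt_oppR (sinq 1)) by apply ex_RInt_sinq.
  apply RInt_extR. intros y _. unfold opp; simpl. rewrite sinq_even. reflexivity.
Qed.

Lemma Si_bound x : Rabs (Si x) <= 4.
Proof.
  pose proof PI_4. pose proof PI_RGT_0.
  assert (Hp : forall x, 0 <= x -> Rabs (Si x) <= 4).
  { intros y Hy. destruct (Rle_lt_dec y 1).
    - unfold Si. eapply Rle_trans.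
      apply (abs_RInt_le_const (sinq 1) 0 y 1); auto. apply ex_RInt_sinq.
      intros t _. pose proof (sinq_bound 1 t). rewrite Rabs_R1 in H1. auto. lra.
    - pose proof (Si_lim y ltac:(lra)).
      replace (Si y) with ((Si y - PI / 2) + PI / 2) by ring.
      eapply Rle_trans. apply Rabs_triang. rewrite (Rabs_right (PI/2)) by lra.
      assert (2 / y <= 2). { unfold Rdiv. assert (/ y <= 1). { rewrite <- Rinv_1. apply Rinv_le_contravar; lra. } lra. }
      lra. }
  destruct (Rle_lt_dec 0 x). auto.
  replace x with (- - x) by ring. rewrite Si_odd, Rabs_Ropp. apply Hp. lra.
Qed.


Ltac cont2d' := repeat first [ apply continuity_2d_pt_mult | apply continuity_2d_pt_plus
  | apply continuity_2d_pt_minus | apply continuity_2d_pt_opp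
  | apply continuity_2d_pt_id1 | apply continuity_2d_pt_id2 | apply continuity_2d_pt_const
  | apply (continuity_1d_2d_pt_comp cos); [apply continuity_cos|]
  | apply (continuity_1d_2d_pt_comp sin); [apply continuity_sin|]
  | apply (continuity_1d_2d_pt_comp (sinq _)); [apply sinq_contpt|] ].

Lemma RInt_sym_opp (h : R -> R) r : ex_RInt h (- r) r ->
  RInt (fun y => h (- y)) (- r) r = RInt h (- r) r.
Proof.
  intros Hex.
  assert (H : is_RInt h (- r) (- - r) (RInt h (- r) r)).
  { rewrite Ropp_involutive. apply (@RInt_correct R_CompleteNormedModule). auto. }
  apply is_RInt_comp_opp in H. apply is_RInt_swap in H. apply is_RInt_opp in H.
  apply (@is_RInt_unique R_CompleteNormedModule).
  unfold opp in H; simpl in H. rewrite Ropp_involutive in H.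
  eapply is_RInt_ext; [|exact H]. intros x _. simpl. ring.
Qed.

Lemma odd_int (f : R -> R) r : (forall x, f (- x) = - f x) -> ex_RInt f (- r) r ->
  RInt f (- r) r = 0.
Proof.
  intros Hodd Hex. pose proof (RInt_sym_opp f r Hex) as H.
  rewrite (RInt_extR _ (fun x => - f x)) in H by (intros; apply Hodd).
  rewrite RInt_oppR in H by auto. lra.
Qed.

Lemma RInt_sinq_sym c r : RInt (sinq c) (- r) r = 2 * Si (c * r).
Proof.
  rewrite RInt_sinq_lin.
  rewrite <- (RInt_Chasles (sinq 1) (c * - r) 0 (c * r)) by apply ex_RInt_sinq.
  unfold plus; simpl.
  rewrite <- (opp_RInt_swap (sinq 1)) by apply ex_RInt_sinq.
  fold (Si (c * - r)). fold (Si (c * r)).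
  replace (c * - r) with (- (c * r)) by ring. rewrite Si_odd. unfold opp; simpl. ring.
Qed.


Definition Pf (b0 r t : R) : R := RInt (fun b => sinq b0 b * cos (t * b)) (- r) r.
Definition Qf (b0 r t : R) : R := RInt (fun b => sinq b0 b * sin (t * b)) (- r) r.
Definition Gf (b0 r a b : R) : R :=
  RInt (fun y => sinq b0 b * sinq b0 y * sinq a (b - y)) (- r) r.
Definition Jf (b0 r a : R) : R := RInt (fun b => Gf b0 r a b) (- r) r.

Lemma ex_RInt_cos_w b0 t a b : ex_RInt (fun x => sinq b0 x * cos (t * x)) a b.
Proof. apply ex_RInt_cont. intros. apply continuity_pt_mult. apply sinq_contpt. cont1d. Qed.
Lemma ex_RInt_sin_w b0 t a b : ex_RInt (fun x => sinq b0 x * sin (t * x)) a b.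
Proof. apply ex_RInt_cont. intros. apply continuity_pt_mult. apply sinq_contpt. cont1d. Qed.

Lemma Pf_cont b0 r t : 0 <= r -> continuity_pt (Pf b0 r) t.
Proof.
  intros Hr. apply continuity_pt_filterlim. unfold Pf.
  apply (param_cont (fun b t => sinq b0 b * cos (t * b))). lra.
  intros; cont2d'. intros; apply ex_RInt_cos_w.
Qed.
Lemma Qf_cont b0 r t : 0 <= r -> continuity_pt (Qf b0 r) t.
Proof.
  intros Hr. apply continuity_pt_filterlim. unfold Qf.
  apply (param_cont (fun b t => sinq b0 b * sin (t * b))). lra.
  intros; cont2d'. intros; apply ex_RInt_sin_w.
Qed.

Lemma Qf_zero b0 r t : Qf b0 r t = 0.
Proof.
  unfold Qf. apply odd_int. intros x. rewrite sinq_even.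
  replace (t * - x) with (- (t * x)) by ring. rewrite sin_neg. ring.
  apply ex_RInt_sin_w.
Qed.

Lemma ex_RInt_G_inner b0 a b p q : ex_RInt (fun y => sinq b0 b * sinq b0 y * sinq a (b - y)) p q.
Proof.
  apply ex_RInt_cont. intros z _. apply continuity_pt_mult. apply continuity_pt_mult. cont1d.
  apply sinq_contpt. apply (continuity_pt_comp (fun y => b - y) (sinq a)). cont1d. apply sinq_contpt.
Qed.

Lemma Gf_cont b0 r a b : 0 <= r -> continuity_pt (Gf b0 r a) b.
Proof.
  intros Hr. apply continuity_pt_filterlim. unfold Gf.
  apply (param_cont (fun y b => sinq b0 b * sinq b0 y * sinq a (b - y))). lra.
  intros; cont2d'. intros; apply ex_RInt_G_inner.
Qed.

Lemma Gf_derive b0 r a b : 0 <= r ->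
  is_derive (fun a => Gf b0 r a b) a (sinq b0 b * (cos (a * b) * Pf b0 r a + sin (a * b) * Qf b0 r a)).
Proof.
  intros Hr. unfold Gf.
  set (f := fun u y => sinq b0 b * sinq b0 y * sinq u (b - y)).
  assert (Hd : forall u y, is_derive (fun z => f z y) u (sinq b0 b * sinq b0 y * cos (u * (b - y)))).
  { intros u y. unfold f. apply (is_derive_scal (fun z => sinq z (b - y))). apply sinq_derive_c. }
  assert (HD : forall u y, Derive (fun z => f z y) u = sinq b0 b * sinq b0 y * cos (u * (b - y))).
  { intros. apply is_derive_unique. apply Hd. }
  pose proof (is_derive_RInt_param f (- r) r a) as H.
  assert (E : RInt (fun t => Derive (fun u => f u t) a) (- r) r =
     sinq b0 b * (cos (a * b) * Pf b0 r a + sin (a * b) * Qf b0 r a)).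
  { rewrite (RInt_extR _ (fun t => (sinq b0 b * cos (a * b)) * (sinq b0 t * cos (a * t))
                               + (sinq b0 b * sin (a * b)) * (sinq b0 t * sin (a * t)))).
    2:{ intros x _. rewrite HD. replace (a * (b - x)) with (a * b - a * x) by ring.
        rewrite cos_minus. ring. }
    rewrite (RInt_plusR (fun t => (sinq b0 b * cos (a * b)) * (sinq b0 t * cos (a * t)))
                        (fun t => (sinq b0 b * sin (a * b)) * (sinq b0 t * sin (a * t)))).
    2:{ apply ex_RInt_scalR. apply ex_RInt_cos_w. }
    2:{ apply ex_RInt_scalR. apply ex_RInt_sin_w. }
    rewrite (RInt_scalR (fun t => sinq b0 t * cos (a * t))) by apply ex_RInt_cos_w.
    rewrite (RInt_scalR (fun t => sinq b0 t * sin (a * t))) by apply ex_RInt_sin_w.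
    unfold Pf, Qf. toR. ring. }
  rewrite <- E. apply H.
  - apply filter_forall. intros x t _. eexists. apply Hd.
  - intros t _. apply (continuity_2d_pt_ext (fun u v => sinq b0 b * sinq b0 v * cos (u * (b - v)))).
    intros; rewrite HD; auto. cont2d'.
  - apply filter_forall. intros y. apply ex_RInt_G_inner.
Qed.

Lemma Jf_derive b0 r a : 0 <= r ->
  is_derive (Jf b0 r) a (Pf b0 r a * Pf b0 r a + Qf b0 r a * Qf b0 r a).
Proof.
  intros Hr. unfold Jf.
  set (dG := fun u v => sinq b0 v * (cos (u * v) * Pf b0 r u + sin (u * v) * Qf b0 r u)).
  assert (HD : forall u v, Derive (fun z => Gf b0 r z v) u = dG u v).
  { intros. apply is_derive_unique. apply Gf_derive; auto. }
  pose proof (is_derive_RInt_param (Gf b0 r) (- r) r a) as H.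
  assert (E : RInt (fun t => Derive (fun u => Gf b0 r u t) a) (- r) r =
     Pf b0 r a * Pf b0 r a + Qf b0 r a * Qf b0 r a).
  { rewrite (RInt_extR _ (fun t => Pf b0 r a * (sinq b0 t * cos (a * t))
                               + Qf b0 r a * (sinq b0 t * sin (a * t)))).
    2:{ intros x _. rewrite HD. unfold dG. ring. }
    rewrite (RInt_plusR (fun t => Pf b0 r a * (sinq b0 t * cos (a * t)))
                        (fun t => Qf b0 r a * (sinq b0 t * sin (a * t)))).
    2:{ apply ex_RInt_scalR. apply ex_RInt_cos_w. }
    2:{ apply ex_RInt_scalR. apply ex_RInt_sin_w. }
    rewrite (RInt_scalR (fun t => sinq b0 t * cos (a * t))) by apply ex_RInt_cos_w.
    rewrite (RInt_scalR (fun t => sinq b0 t * sin (a * t))) by apply ex_RInt_sin_w.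
    toR. unfold Pf, Qf. ring. }
  rewrite <- E. apply H.
  - apply filter_forall. intros x t _. eexists. apply Gf_derive; auto.
  - intros t _. apply (continuity_2d_pt_ext dG).
    intros; rewrite HD; auto. unfold dG.
    apply continuity_2d_pt_mult. cont2d'.
    apply continuity_2d_pt_plus; apply continuity_2d_pt_mult.
    cont2d'. apply (continuity_1d_2d_pt_comp (Pf b0 r) (fun u v => u)). apply Pf_cont; auto. cont2d'.
    cont2d'. apply (continuity_1d_2d_pt_comp (Qf b0 r) (fun u v => u)). apply Qf_cont; auto. cont2d'.
  - apply filter_forall. intros y. apply ex_RInt_cont. intros. apply Gf_cont; auto.
Qed.

Lemma Jf_0 b0 r : Jf b0 r 0 = 0.
Proof.
  unfold Jf, Gf.
  rewrite (RInt_extR _ (fun _ => 0)).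
  - rewrite RInt_const. unfold scal; simpl; unfold mult; simpl. ring.
  - intros x _. rewrite (RInt_extR _ (fun _ => 0)).
    + rewrite RInt_const. unfold scal; simpl; unfold mult; simpl. ring.
    + intros y _. rewrite sinq_0c. ring.
Qed.

Lemma Jf_formula b0 r a : 0 <= r -> Jf b0 r a = RInt (fun t => Pf b0 r t * Pf b0 r t) 0 a.
Proof.
  intros Hr. symmetry. apply (@is_RInt_unique R_CompleteNormedModule).
  assert (H : is_RInt (fun t => Pf b0 r t * Pf b0 r t + Qf b0 r t * Qf b0 r t) 0 a
                (minus (Jf b0 r a) (Jf b0 r 0))).
  { apply (is_RInt_derive (Jf b0 r)).
    - intros x _. cbv beta. exact (Jf_derive b0 r x Hr).
    - intros x _. apply continuity_pt_filterlim.
      apply continuity_pt_plus; apply continuity_pt_mult.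
      exact (Pf_cont b0 r x Hr). exact (Pf_cont b0 r x Hr).
      exact (Qf_cont b0 r x Hr). exact (Qf_cont b0 r x Hr). }
  rewrite Jf_0 in H. unfold minus, plus, opp in H. cbn -[Jf Pf Qf] in H.
  rewrite Ropp_0, Rplus_0_r in H.
  eapply is_RInt_ext; [|exact H]. intros x _. cbv beta. rewrite Qf_zero. toR. ring.
Qed.

Lemma Pf_Si b0 r t : Pf b0 r t = Si ((b0 + t) * r) + Si ((b0 - t) * r).
Proof.
  unfold Pf.
  rewrite (RInt_extR _ (fun b => / 2 * sinq (b0 + t) b + / 2 * sinq (b0 - t) b)).
  2:{ intros x _. unfold sinq. destruct (Req_EM_T x 0) as [->|Hx].
      - rewrite Rmult_0_r, cos_0. field.
      - replace ((b0 + t) * x) with (b0 * x + t * x) by ring.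
        replace ((b0 - t) * x) with (b0 * x - t * x) by ring.
        rewrite sin_plus, sin_minus. field. auto. }
  rewrite (RInt_plusR (fun b => / 2 * sinq (b0 + t) b) (fun b => / 2 * sinq (b0 - t) b)).
  2,3: apply ex_RInt_scalR, ex_RInt_sinq.
  rewrite !(RInt_scalR (sinq _)) by apply ex_RInt_sinq.
  rewrite !RInt_sinq_sym. field.
Qed.

Lemma Jf_Si b0 r a : 0 <= r ->
  Jf b0 r a = RInt (fun t => (Si ((b0 + t) * r) + Si ((b0 - t) * r)) ^ 2) 0 a.
Proof.
  intros Hr. rewrite Jf_formula by auto. apply RInt_extR. intros x _. rewrite Pf_Si. ring.
Qed.


Lemma RInt_approx (f : R -> R) a b c eta : a <= b -> ex_RInt f a b ->
  (forall t, a < t < b -> c - eta <= f t <= c + eta) ->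
  (c - eta) * (b - a) <= RInt f a b <= (c + eta) * (b - a).
Proof.
  intros Hab Hex H. split.
  - replace ((c - eta) * (b - a)) with (RInt (fun _ => c - eta) a b).
    apply RInt_le; auto. apply ex_RInt_const. intros; apply H; auto.
    rewrite RInt_const. unfold scal; simpl; unfold mult; simpl. ring.
  - replace ((c + eta) * (b - a)) with (RInt (fun _ => c + eta) a b).
    apply RInt_le; auto. apply ex_RInt_const. intros; apply H; auto.
    rewrite RInt_const. unfold scal; simpl; unfold mult; simpl. ring.
Qed.

Definition Fr (b0 r t : R) : R := (Si ((b0 + t) * r) + Si ((b0 - t) * r)) ^ 2.

Lemma Si_near x d r : 0 < d -> 0 < r -> d * r <= x -> - (2 / (d * r)) <= Si x - PI / 2 <= 2 / (d * r).
Proof.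
  intros Hd Hr Hx. assert (Hdr : 0 < d * r) by nra.
  pose proof (Si_lim x ltac:(lra)) as Hs. apply abs_split in Hs.
  assert (2 / x <= 2 / (d * r)).
  { unfold Rdiv. apply Rmult_le_compat_l. lra. apply Rinv_le_contravar; lra. }
  lra.
Qed.

Lemma Fr_bound b0 r t : Rabs (Fr b0 r t) <= 64.
Proof.
  unfold Fr. pose proof (Si_bound ((b0 + t) * r)). pose proof (Si_bound ((b0 - t) * r)).
  apply abs_split in H. apply abs_split in H0.
  rewrite Rabs_right by (apply Rle_ge; apply pow2_ge_0).
  set (u := Si ((b0 + t) * r) + Si ((b0 - t) * r)).
  assert (-8 <= u <= 8) by (unfold u; lra). simpl. nra.
Qed.

Lemma Fr_low b0 r t d : 0 < d <= b0 -> 0 < r -> 0 <= t -> t <= b0 - d ->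
  Rabs (Fr b0 r t - PI ^ 2) <= 48 / (d * r).
Proof.
  intros Hd Hr Ht1 Ht2. pose proof PI_4. pose proof PI_RGT_0.
  assert (Hdr : 0 < d * r) by nra.
  destruct (Si_near ((b0 + t) * r) d r) as [A1 A2]; try lra. nra.
  destruct (Si_near ((b0 - t) * r) d r) as [B1 B2]; try lra. nra.
  pose proof (Si_bound ((b0 + t) * r)). pose proof (Si_bound ((b0 - t) * r)).
  apply abs_split in H1. apply abs_split in H2.
  unfold Fr. set (A := Si ((b0 + t) * r) - PI / 2) in *. set (B := Si ((b0 - t) * r) - PI / 2) in *.
  replace ((Si ((b0 + t) * r) + Si ((b0 - t) * r)) ^ 2 - PI ^ 2) with ((A + B) * (2 * PI + A + B))
    by (unfold A, B; field).
  set (e := 2 / (d * r)) in *.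
  replace (48 / (d * r)) with ((2 * e) * 12) by (unfold e; field; lra).
  rewrite Rabs_mult. apply Rmult_le_compat; try apply Rabs_pos.
  - apply abs_intro. lra.
  - apply abs_intro. unfold A, B in *. lra.
Qed.

Lemma Fr_high b0 r t d : 0 < d -> 0 < b0 -> 0 < r -> b0 + d <= t ->
  Rabs (Fr b0 r t) <= 48 / (d * r).
Proof.
  intros Hd Hb Hr Ht. pose proof PI_4. pose proof PI_RGT_0.
  assert (Hdr : 0 < d * r) by nra.
  destruct (Si_near ((b0 + t) * r) d r) as [A1 A2]; try lra. nra.
  destruct (Si_near ((t - b0) * r) d r) as [B1 B2]; try lra. nra.
  unfold Fr. replace ((b0 - t) * r) with (- ((t - b0) * r)) by ring. rewrite Si_odd.
  set (A := Si ((b0 + t) * r) - PI / 2) in *. set (B := Si ((t - b0) * r) - PI / 2) in *.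
  replace ((Si ((b0 + t) * r) + - Si ((t - b0) * r)) ^ 2) with ((A - B) * (A - B)) by (unfold A, B; field).
  set (e := 2 / (d * r)) in *.
  pose proof (Si_bound ((b0 + t) * r)). pose proof (Si_bound ((t - b0) * r)).
  apply abs_split in H1. apply abs_split in H2.
  assert (HAB : Rabs (A - B) <= 2 * e) by (apply abs_intro; lra).
  assert (HAB8 : Rabs (A - B) <= 8) by (apply abs_intro; unfold A, B; lra).
  replace (48 / (d * r)) with (8 * (2 * e) + 8 * e) by (unfold e; field; lra).
  assert (0 <= e) by (unfold e; unfold Rdiv; apply Rmult_le_pos; [lra|left; apply Rinv_0_lt_compat; lra]).
  rewrite Rabs_mult. pose proof (Rabs_pos (A - B)). nra.
Qed.

Lemma Si_cont x : continuity_pt Si x.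
Proof.
  apply continuity_pt_filterlim. apply (@ex_derive_continuous R_AbsRing R_NormedModule).
  exists (sinq 1 x). unfold Si.
  apply (is_derive_RInt (sinq 1) (fun b => RInt (sinq 1) 0 b) 0 x).
  - apply filter_forall. intros b. apply (@RInt_correct R_CompleteNormedModule). apply ex_RInt_sinq.
  - apply sinq_continuous.
Qed.

Lemma Fr_cont b0 r t : continuity_pt (Fr b0 r) t.
Proof.
  unfold Fr. apply continuity_pt_mult.
  apply continuity_pt_plus.
  apply (continuity_pt_comp (fun t => (b0 + t) * r) Si). cont1d. apply Si_cont.
  apply (continuity_pt_comp (fun t => (b0 - t) * r) Si). cont1d. apply Si_cont.
  apply continuity_pt_mult. 
  apply continuity_pt_plus.
  apply (continuity_pt_comp (fun t => (b0 + t) * r) Si). cont1d. apply Si_cont.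
  apply (continuity_pt_comp (fun t => (b0 - t) * r) Si). cont1d. apply Si_cont.
  cont1d.
Qed.

Lemma ex_RInt_Fr b0 r a b : ex_RInt (Fr b0 r) a b.
Proof. apply ex_RInt_cont. intros; apply Fr_cont. Qed.

Lemma J_lim_pos b0 a : 0 < b0 -> 0 <= a -> forall eps, 0 < eps ->
  exists M, forall r, M <= r -> Rabs (Jf b0 r a - PI ^ 2 * Rmin a b0) < eps.
Proof.
  intros Hb Ha eps Heps. pose proof PI_4. pose proof PI_RGT_0.
  set (d := Rmin (b0 / 2) (eps / 320)).
  assert (Hd : 0 < d <= b0 / 2 /\ d <= eps / 320).
  { unfold d. split; [split|]. apply Rmin_glb_lt; lra. apply Rmin_l. apply Rmin_r. }
  assert (Hde : 0 < d * eps) by nra.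
  exists (96 * (a + 1) / (d * eps) + 1). intros r Hr.
  assert (HM0 : 0 < 96 * (a + 1) / (d * eps)) by (apply Rdiv_lt_0_compat; lra).
  assert (Hr0 : 0 < r) by lra.
  assert (Hdr : 0 < d * r) by nra.
  rewrite Jf_Si by lra. fold (Fr b0 r).
  set (eta := 48 / (d * r)).
  assert (Heta : 0 < eta) by (apply Rdiv_lt_0_compat; lra).
  assert (Hetaa : eta * a < eps / 2).
  { unfold eta.
    assert (96 * (a + 1) / (d * eps) < r) by lra.
    apply Rmult_lt_compat_r with (r := d * eps) in H1; [|lra].
    unfold Rdiv in H1. rewrite Rmult_assoc, Rinv_l, Rmult_1_r in H1 by lra.
    unfold Rdiv. apply Rmult_lt_reg_r with (d * r); [lra|].
    rewrite Rmult_assoc, (Rmult_comm a), <- Rmult_assoc, (Rmult_assoc 48), Rinv_l, Rmult_1_r by lra.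
    nra. }
  set (t1 := Rmin a (b0 - d)). set (t2 := Rmin a (b0 + d)).
  assert (Ht1 : 0 <= t1 <= a /\ t1 <= b0 - d) by (unfold t1; split; [split|]; [apply Rmin_glb; lra|apply Rmin_l|apply Rmin_r]).
  assert (Ht2 : t1 <= t2 <= a /\ t2 - t1 <= 2 * d).
  { unfold t1, t2. unfold Rmin. repeat destruct Rle_dec; lra. }
  assert (HT : t1 <= Rmin a b0 <= t2).
  { unfold t1, t2. unfold Rmin. repeat destruct Rle_dec; lra. }
  rewrite <- (RInt_Chasles (Fr b0 r) 0 t1 a) by apply ex_RInt_Fr.
  rewrite <- (RInt_Chasles (Fr b0 r) t1 t2 a) by apply ex_RInt_Fr.
  unfold plus; simpl.
  destruct (RInt_approx (Fr b0 r) 0 t1 (PI ^ 2) eta) as [I1a I1b]. lra. apply ex_RInt_Fr.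
  { intros t Ht. pose proof (Fr_low b0 r t d ltac:(lra) Hr0 ltac:(lra) ltac:(lra)).
    fold eta in H1. apply abs_split in H1. lra. }
  destruct (RInt_approx (Fr b0 r) t1 t2 0 64) as [I2a I2b]. lra. apply ex_RInt_Fr.
  { intros t Ht. pose proof (Fr_bound b0 r t). apply abs_split in H1. lra. }
  destruct (RInt_approx (Fr b0 r) t2 a 0 eta) as [I3a I3b]. lra. apply ex_RInt_Fr.
  { intros t Ht.
    assert (b0 + d <= t).
    { destruct Ht as [Ht Ht']. unfold t2 in Ht. unfold Rmin in Ht. destruct Rle_dec; lra. }
    pose proof (Fr_high b0 r t d ltac:(lra) Hb Hr0 H1).
    fold eta in H2. apply abs_split in H2. lra. }
  assert (E1 : eta * (t1 - 0) + eta * (a - t2) <= eta * a) by nra.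
  assert (E2 : PI ^ 2 <= 16) by nra.
  assert (E3 : PI ^ 2 * t1 <= PI ^ 2 * Rmin a b0 <= PI ^ 2 * t1 + 16 * (2 * d)).
  { split. apply Rmult_le_compat_l. nra. lra.
    assert (PI ^ 2 * Rmin a b0 <= PI ^ 2 * t2) by (apply Rmult_le_compat_l; nra).
    assert (PI ^ 2 * (t2 - t1) <= 16 * (2 * d)) by (apply Rmult_le_compat; nra).
    nra. }
  apply Rabs_def1; nra.
Qed.


Definition clamp (b0 x : R) : R := Rmax (- b0) (Rmin x b0).

Lemma Jf_opp b0 r a : 0 <= r -> Jf b0 r (- a) = - Jf b0 r a.
Proof.
  intros Hr. unfold Jf.
  rewrite (RInt_extR _ (fun b => - Gf b0 r a b)).
  - apply RInt_oppR. apply ex_RInt_cont. intros; apply Gf_cont; auto.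
  - intros b _. unfold Gf. rewrite <- RInt_oppR by apply ex_RInt_G_inner.
    apply RInt_extR. intros y _. rewrite sinq_oppc. ring.
Qed.

Definition tends (f : R -> R) (l : R) : Prop :=
  forall eps, 0 < eps -> exists M, forall r, M <= r -> Rabs (f r - l) < eps.

Lemma J_lim b0 a : 0 < b0 -> tends (fun r => Jf b0 r a) (PI ^ 2 * clamp b0 a).
Proof.
  intros Hb eps Heps. destruct (Rle_lt_dec 0 a) as [Ha|Ha].
  - destruct (J_lim_pos b0 a Hb Ha eps Heps) as [M HM]. exists M. intros r Hr.
    replace (clamp b0 a) with (Rmin a b0). auto.
    unfold clamp, Rmax, Rmin. repeat destruct Rle_dec; lra.
  - destruct (J_lim_pos b0 (- a) Hb ltac:(lra) eps Heps) as [M HM]. exists (Rmax M 0).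
    intros r Hr. pose proof (HM r (Rle_trans _ _ _ (Rmax_l _ _) Hr)).
    rewrite Jf_opp in H by (pose proof (Rmax_r M 0); lra).
    replace (clamp b0 a) with (- Rmin (- a) b0).
    replace (Jf b0 r a - PI ^ 2 * - Rmin (- a) b0) with (- (- Jf b0 r a - PI ^ 2 * Rmin (- a) b0)) by ring.
    rewrite Rabs_Ropp. auto.
    unfold clamp, Rmax, Rmin. repeat destruct Rle_dec; lra.
Qed.

Lemma tends_lin f g l1 l2 c1 c2 : tends f l1 -> tends g l2 ->
  tends (fun r => c1 * f r + c2 * g r) (c1 * l1 + c2 * l2).
Proof.
  intros Hf Hg eps Heps.
  set (e := eps / (2 * (Rabs c1 + Rabs c2 + 1))).
  assert (He : 0 < e). { unfold e. apply Rdiv_lt_0_compat. lra. pose proof (Rabs_pos c1); pose proof (Rabs_pos c2); lra. }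
  destruct (Hf e He) as [M1 H1]. destruct (Hg e He) as [M2 H2].
  exists (Rmax M1 M2). intros r Hr.
  pose proof (H1 r (Rle_trans _ _ _ (Rmax_l _ _) Hr)).
  pose proof (H2 r (Rle_trans _ _ _ (Rmax_r _ _) Hr)).
  replace (c1 * f r + c2 * g r - (c1 * l1 + c2 * l2)) with (c1 * (f r - l1) + c2 * (g r - l2)) by ring.
  eapply Rle_lt_trans. apply Rabs_triang. rewrite !Rabs_mult.
  pose proof (Rabs_pos c1); pose proof (Rabs_pos c2).
  assert (Rabs c1 * Rabs (f r - l1) <= Rabs c1 * e) by (apply Rmult_le_compat_l; lra).
  assert (Rabs c2 * Rabs (g r - l2) <= Rabs c2 * e) by (apply Rmult_le_compat_l; lra).
  assert ((Rabs c1 + Rabs c2) * e < eps).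
  { unfold e. apply Rmult_lt_reg_r with (2 * (Rabs c1 + Rabs c2 + 1)). lra.
    unfold Rdiv. rewrite Rmult_assoc, (Rmult_assoc eps), Rinv_l, Rmult_1_r by lra. nra. }
  lra.
Qed.

Lemma c2d_snd F x y : continuity_2d_pt F x y -> continuity_pt (fun t => F x t) y.
Proof.
  intros H. apply continuity_pt_filterlim. apply filterlim_locally. intros eps.
  destruct (H eps) as [d Hd]. exists d. intros t Ht. apply (Hd x t).
  rewrite Rminus_eq_0, Rabs_R0; apply cond_pos. exact Ht.
Qed.

Lemma dbl_from_RInt (F : R -> R -> R) l :
  (forall x y, continuity_2d_pt F x y) -> (forall x y, continuity_2d_pt (fun u v => F v u) x y) ->
  tends (fun r => RInt (fun b => RInt (fun b' => F b b') (- r) r) (- r) r) l ->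
  double_int_R2 F l.
Proof.
  intros HF HF' Hl.
  exists (fun r => RInt (fun b => RInt (fun b' => F b b') (- r) r) (- r) r). split; auto.
  intros r Hr. exists (fun b => RInt (fun b' => F b b') (- r) r).
  assert (Hin : forall b, ex_RInt (fun b' => F b b') (- r) r).
  { intros b. apply ex_RInt_cont. intros z _. apply c2d_snd. apply HF. }
  split.
  - intros b. exists (ex_RInt_Reals_0 _ _ _ (Hin b)). rewrite <- RInt_Reals. reflexivity.
  - assert (Hout : ex_RInt (fun b => RInt (fun b' => F b b') (- r) r) (- r) r).
    { apply ex_RInt_cont. intros z _. apply continuity_pt_filterlim.
      apply (param_cont (fun t p => F p t)). lra. intros; apply HF'. intros; apply Hin. }
    exists (ex_RInt_Reals_0 _ _ _ Hout). rewrite <- RInt_Reals. reflexivity.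
Qed.

Lemma tends_ext f g l : (forall r, 0 <= r -> f r = g r) -> tends g l -> tends f l.
Proof.
  intros H Hg eps He. destruct (Hg eps He) as [M HM]. exists (Rmax M 0). intros r Hr.
  rewrite H by (pose proof (Rmax_r M 0); lra). apply HM. pose proof (Rmax_l M 0); lra.
Qed.

Lemma tends_const c : tends (fun _ => c) c.
Proof. intros eps He. exists 0. intros. rewrite Rminus_eq_0, Rabs_R0. auto. Qed.

Lemma real_part (F : R -> R -> R) b0 K w k : 0 < b0 ->
  (forall b b', F b b' = k * (sinq K (b - b') * cos (w * (b - b'))) * sinq b0 b * sinq b0 b') ->
  double_int_R2 F (k / 2 * PI ^ 2 * (clamp b0 (K + w) + clamp b0 (K - w))).
Proof.
  intros Hb HF. apply dbl_from_RInt.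
  - intros x y. apply (continuity_2d_pt_ext (fun b b' => k * (sinq K (b - b') * cos (w * (b - b'))) * sinq b0 b * sinq b0 b')).
    intros; rewrite HF; auto. cont2d'.
  - intros x y. apply (continuity_2d_pt_ext (fun b' b => k * (sinq K (b - b') * cos (w * (b - b'))) * sinq b0 b * sinq b0 b')).
    intros; rewrite HF; auto. cont2d'.
  - apply (tends_ext _ (fun r => k / 2 * Jf b0 r (K + w) + k / 2 * Jf b0 r (K - w))).
    + intros r Hr. unfold Jf.
      rewrite <- (RInt_scalR (fun b => Gf b0 r (K + w) b)), <- (RInt_scalR (fun b => Gf b0 r (K - w) b)).
      2,3: apply ex_RInt_cont; intros; apply Gf_cont; auto.
      rewrite <- (RInt_plusR (fun b => k / 2 * Gf b0 r (K + w) b) (fun b => k / 2 * Gf b0 r (K - w) b)).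
      2,3: apply ex_RInt_scalR; apply ex_RInt_cont; intros; apply Gf_cont; auto.
      apply RInt_extR. intros b _. unfold Gf.
      rewrite <- (RInt_scalR (fun y => sinq b0 b * sinq b0 y * sinq (K + w) (b - y))) by apply ex_RInt_G_inner.
      rewrite <- (RInt_scalR (fun y => sinq b0 b * sinq b0 y * sinq (K - w) (b - y))) by apply ex_RInt_G_inner.
      rewrite <- RInt_plusR by (apply ex_RInt_scalR, ex_RInt_G_inner).
      apply RInt_extR. intros y _. rewrite HF.
      unfold sinq. destruct (Req_EM_T (b - y) 0) as [E|E].
      * rewrite E, Rmult_0_r, cos_0. field.
      * replace ((K + w) * (b - y)) with (K * (b - y) + w * (b - y)) by ring.
        replace ((K - w) * (b - y)) with (K * (b - y) - w * (b - y)) by ring.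
        rewrite sin_plus, sin_minus. field. auto.
    + replace (k / 2 * PI ^ 2 * (clamp b0 (K + w) + clamp b0 (K - w))) with
        (k / 2 * (PI ^ 2 * clamp b0 (K + w)) + k / 2 * (PI ^ 2 * clamp b0 (K - w))) by ring.
      apply tends_lin; apply J_lim; auto.
Qed.

Lemma imag_part (F : R -> R -> R) b0 K w k :
  (forall b b', F b b' = k * (sinq K (b - b') * sin (w * (b - b'))) * sinq b0 b * sinq b0 b') ->
  double_int_R2 F 0.
Proof.
  intros HF. apply dbl_from_RInt.
  - intros x y. apply (continuity_2d_pt_ext (fun b b' => k * (sinq K (b - b') * sin (w * (b - b'))) * sinq b0 b * sinq b0 b')).
    intros; rewrite HF; auto. cont2d'.
  - intros x y. apply (continuity_2d_pt_ext (fun b' b => k * (sinq K (b - b') * sin (w * (b - b'))) * sinq b0 b * sinq b0 b')).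
    intros; rewrite HF; auto. cont2d'.
  - apply (tends_ext _ (fun _ => 0)); [|apply tends_const].
    intros r Hr.
    assert (Hex : forall b, ex_RInt (fun b' => F b b') (- r) r).
    { intros b. apply ex_RInt_cont. intros z _.
      apply (continuity_pt_ext (fun b' => k * (sinq K (b - b') * sin (w * (b - b'))) * sinq b0 b * sinq b0 b')).
      intros; rewrite HF; auto.
      apply continuity_pt_mult; [|apply sinq_contpt]. apply continuity_pt_mult; [|cont1d].
      apply continuity_pt_mult; [cont1d|]. apply continuity_pt_mult.
      apply (continuity_pt_comp (fun b' => b - b') (sinq K)). cont1d. apply sinq_contpt. cont1d. }
    apply odd_int.
    + intros b. rewrite <- (RInt_sym_opp (fun b' => F (- b) b')) by apply Hex.
      rewrite <- RInt_oppR by apply Hex. apply RInt_extR. intros y _.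
      rewrite !HF. replace (- b - - y) with (- (b - y)) by ring.
      rewrite !sinq_even. replace (w * - (b - y)) with (- (w * (b - y))) by ring.
      rewrite sin_neg. ring.
    + apply ex_RInt_cont. intros z _. apply continuity_pt_filterlim.
      apply (param_cont (fun t p => F p t)). lra.
      intros t _. apply (continuity_2d_pt_ext (fun b' b => k * (sinq K (b - b') * sin (w * (b - b'))) * sinq b0 b * sinq b0 b')).
      intros; rewrite HF; auto. cont2d'. intros; apply Hex.
Qed.


Lemma fst_mom hbar sgn alpha g0 kappa0 b0 lambda s b b' : 0 < hbar ->
  fst (mom_integrand hbar sgn alpha g0 kappa0 b0 lambda s b b') =
  (/ (2 * PI * hbar) * (Cc alpha g0 kappa0 b0 lambda / (b0 * PI))) *
  (sinq (Kc alpha g0 kappa0 b0 lambda) (b - b') * cos ((sgn * lambda / 2 - s / hbar) * (b - b')))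
  * sinq b0 b * sinq b0 b'.
Proof.
  intros Hh. unfold mom_integrand, rho, Cscal, Cmul, Cexpi. simpl.
  replace ((sgn * lambda / 2 - s / hbar) * (b - b')) with
    (sgn * lambda / 2 * (b - b') + - s * (b - b') / hbar) by (field; lra).
  rewrite cos_plus. ring.
Qed.

Lemma snd_mom hbar sgn alpha g0 kappa0 b0 lambda s b b' : 0 < hbar ->
  snd (mom_integrand hbar sgn alpha g0 kappa0 b0 lambda s b b') =
  (/ (2 * PI * hbar) * (Cc alpha g0 kappa0 b0 lambda / (b0 * PI))) *
  (sinq (Kc alpha g0 kappa0 b0 lambda) (b - b') * sin ((sgn * lambda / 2 - s / hbar) * (b - b')))
  * sinq b0 b * sinq b0 b'.
Proof.
  intros Hh. unfold mom_integrand, rho, Cscal, Cmul, Cexpi. simpl.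
  replace ((sgn * lambda / 2 - s / hbar) * (b - b')) with
    (sgn * lambda / 2 * (b - b') + - s * (b - b') / hbar) by (field; lra).
  rewrite sin_plus. ring.
Qed.

Lemma mom_density_val hbar sgn alpha g0 kappa0 b0 lambda s : 0 < hbar -> 0 < b0 ->
  mom_density hbar sgn alpha g0 kappa0 b0 lambda s
   ((/ (2 * PI * hbar) * (Cc alpha g0 kappa0 b0 lambda / (b0 * PI))) / 2 * PI ^ 2 *
     (clamp b0 (Kc alpha g0 kappa0 b0 lambda + (sgn * lambda / 2 - s / hbar)) +
      clamp b0 (Kc alpha g0 kappa0 b0 lambda - (sgn * lambda / 2 - s / hbar)))).
Proof.
  intros Hh Hb. split.
  - apply real_part; auto. intros; apply fst_mom; auto.
  - eapply imag_part. intros; apply snd_mom; auto.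
Qed.

Lemma clamp_mid b0 x : - b0 <= x <= b0 -> clamp b0 x = x.
Proof. intros. unfold clamp, Rmax, Rmin. repeat destruct Rle_dec; lra. Qed.
Lemma clamp_hi b0 x : 0 <= b0 -> b0 <= x -> clamp b0 x = b0.
Proof. intros. unfold clamp, Rmax, Rmin. repeat destruct Rle_dec; lra. Qed.
Lemma clamp_lo b0 x : 0 <= b0 -> x <= - b0 -> clamp b0 x = - b0.
Proof. intros. unfold clamp, Rmax, Rmin. repeat destruct Rle_dec; lra. Qed.

Definition Dfun (hbar b0 lambda s : R) : R :=
  (clamp b0 (lambda - b0 - s / hbar) + clamp b0 (s / hbar - b0)) / (2 * b0 * hbar * (lambda - 2 * b0)).

Lemma div_le_of a b h : 0 < h -> a * h <= b * h -> a <= b.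
Proof. intros. apply Rmult_le_reg_r with h; auto. Qed.

Theorem mainTheorem5 (hbar alpha g0 kappa0 b0 lambda : R)
  (Hh : 0 < hbar) (Ha : 0 < alpha) (Hg : 0 < g0) (Hk : 0 < kappa0)
  (Hb : 0 < b0) (Hl : 2 * b0 < lambda) :
  exists d : R -> R,
    (forall s, mom_density hbar 1 alpha g0 kappa0 b0 lambda s (d s)) /\
    (forall s, mom_density hbar (-1) alpha g0 kappa0 b0 lambda s (d (- s))) /\
    (forall s, (s < 0 \/ lambda * hbar < s) -> d s = 0) /\
    (4 * b0 < lambda ->
       (forall s, 0 <= s <= 2 * b0 * hbar ->
          d s = s / (2 * b0 * hbar ^ 2 * (lambda - 2 * b0))) /\
       (forall s, 2 * b0 * hbar <= s <= (lambda - 2 * b0) * hbar ->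
          d s = 1 / ((lambda - 2 * b0) * hbar)) /\
       (forall s, (lambda - 2 * b0) * hbar <= s <= lambda * hbar ->
          d s = (lambda - s / hbar) / (2 * b0 * hbar * (lambda - 2 * b0)))) /\
    (lambda < 4 * b0 ->
       (forall s, 0 <= s <= (lambda - 2 * b0) * hbar ->
          d s = s / (2 * b0 * hbar ^ 2 * (lambda - 2 * b0))) /\
       (forall s, (lambda - 2 * b0) * hbar <= s <= 2 * b0 * hbar ->
          d s = 1 / (2 * b0 * hbar)) /\
       (forall s, 2 * b0 * hbar <= s <= lambda * hbar ->
          d s = (lambda - s / hbar) / (2 * b0 * hbar * (lambda - 2 * b0)))) /\
    (lambda = 4 * b0 ->
       (forall s, 0 <= s <= lambda * hbar / 2 ->
          d s = 4 * s / (lambda ^ 2 * hbar ^ 2)) /\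
       (forall s, lambda * hbar / 2 <= s <= lambda * hbar ->
          d s = 4 * (lambda - s / hbar) / (lambda ^ 2 * hbar))).
Proof.
  pose proof PI_RGT_0 as HPI.
  assert (HK : Kc alpha g0 kappa0 b0 lambda = (lambda - 2 * b0) / 2).
  { unfold Kc, dtau. field. repeat split; lra. }
  assert (HC : Cc alpha g0 kappa0 b0 lambda = 2 / (lambda - 2 * b0)).
  { unfold Cc, dtau. field. repeat split; lra. }
  exists (Dfun hbar b0 lambda).
  assert (Hcoef : / (2 * PI * hbar) * (Cc alpha g0 kappa0 b0 lambda / (b0 * PI)) / 2 * PI ^ 2
                  = / (2 * b0 * hbar * (lambda - 2 * b0))).
  { rewrite HC. field. repeat split; lra. }
  split; [|split; [|split; [|split; [|split]]]].
  - intros s. pose proof (mom_density_val hbar 1 alpha g0 kappa0 b0 lambda s Hh Hb) as H.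
    rewrite Hcoef, HK in H.
    replace ((lambda - 2 * b0) / 2 + (1 * lambda / 2 - s / hbar)) with (lambda - b0 - s / hbar) in H by (field; lra).
    replace ((lambda - 2 * b0) / 2 - (1 * lambda / 2 - s / hbar)) with (s / hbar - b0) in H by (field; lra).
    unfold Dfun. unfold Rdiv at 1. rewrite Rmult_comm. exact H.
  - intros s. pose proof (mom_density_val hbar (-1) alpha g0 kappa0 b0 lambda s Hh Hb) as H.
    rewrite Hcoef, HK in H.
    replace ((lambda - 2 * b0) / 2 + (-1 * lambda / 2 - s / hbar)) with (- s / hbar - b0) in H by (field; lra).
    replace ((lambda - 2 * b0) / 2 - (-1 * lambda / 2 - s / hbar)) with (lambda - b0 - - s / hbar) in H by (field; lra).
    unfold Dfun. unfold Rdiv at 1. rewrite Rmult_comm, Rplus_comm. exact H.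
  - intros s Hs. unfold Dfun. set (p := s / hbar).
    assert (Hsp : s = p * hbar) by (unfold p; field; lra).
    destruct Hs as [Hs|Hs].
    + assert (p < 0). { apply Rmult_lt_reg_r with hbar; auto. lra. }
      rewrite (clamp_hi b0 (lambda - b0 - p)) by lra. rewrite (clamp_lo b0 (p - b0)) by lra.
      unfold Rdiv. ring.
    + assert (lambda < p). { apply Rmult_lt_reg_r with hbar; auto. lra. }
      rewrite (clamp_lo b0 (lambda - b0 - p)) by lra. rewrite (clamp_hi b0 (p - b0)) by lra.
      unfold Rdiv. ring.
  - intros H4. split; [|split].
    + intros s Hs. unfold Dfun. set (p := s / hbar).
      assert (Hsp : s = p * hbar) by (unfold p; field; lra). rewrite Hsp in Hs.
      assert (0 <= p) by (apply div_le_of with hbar; lra).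
      assert (p <= 2 * b0) by (apply div_le_of with hbar; lra).
      rewrite (clamp_hi b0 (lambda - b0 - p)) by lra. rewrite (clamp_mid b0 (p - b0)) by lra.
      rewrite Hsp. field. repeat split; lra.
    + intros s Hs. unfold Dfun. set (p := s / hbar).
      assert (Hsp : s = p * hbar) by (unfold p; field; lra). rewrite Hsp in Hs.
      assert (2 * b0 <= p) by (apply div_le_of with hbar; lra).
      assert (p <= lambda - 2 * b0) by (apply div_le_of with hbar; lra).
      rewrite (clamp_hi b0 (lambda - b0 - p)) by lra. rewrite (clamp_hi b0 (p - b0)) by lra.
      field. repeat split; lra.
    + intros s Hs. unfold Dfun. set (p := s / hbar).
      assert (Hsp : s = p * hbar) by (unfold p; field; lra). rewrite Hsp in Hs.
      assert (lambda - 2 * b0 <= p) by (apply div_le_of with hbar; lra).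
      assert (p <= lambda) by (apply div_le_of with hbar; lra).
      rewrite (clamp_mid b0 (lambda - b0 - p)) by lra. rewrite (clamp_hi b0 (p - b0)) by lra.
      field. repeat split; lra.
  - intros H4. split; [|split].
    + intros s Hs. unfold Dfun. set (p := s / hbar).
      assert (Hsp : s = p * hbar) by (unfold p; field; lra). rewrite Hsp in Hs.
      assert (0 <= p) by (apply div_le_of with hbar; lra).
      assert (p <= lambda - 2 * b0) by (apply div_le_of with hbar; lra).
      rewrite (clamp_hi b0 (lambda - b0 - p)) by lra. rewrite (clamp_mid b0 (p - b0)) by lra.
      rewrite Hsp. field. repeat split; lra.
    + intros s Hs. unfold Dfun. set (p := s / hbar).
      assert (Hsp : s = p * hbar) by (unfold p; field; lra). rewrite Hsp in Hs.
      assert (lambda - 2 * b0 <= p) by (apply div_le_of with hbar; lra).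
      assert (p <= 2 * b0) by (apply div_le_of with hbar; lra).
      rewrite (clamp_mid b0 (lambda - b0 - p)) by lra. rewrite (clamp_mid b0 (p - b0)) by lra.
      field. repeat split; lra.
    + intros s Hs. unfold Dfun. set (p := s / hbar).
      assert (Hsp : s = p * hbar) by (unfold p; field; lra). rewrite Hsp in Hs.
      assert (2 * b0 <= p) by (apply div_le_of with hbar; lra).
      assert (p <= lambda) by (apply div_le_of with hbar; lra).
      rewrite (clamp_mid b0 (lambda - b0 - p)) by lra. rewrite (clamp_hi b0 (p - b0)) by lra.
      field. repeat split; lra.
  - intros H4. subst lambda. split.
    + intros s Hs. unfold Dfun. set (p := s / hbar).
      assert (Hsp : s = p * hbar) by (unfold p; field; lra). rewrite Hsp in Hs.
      assert (0 <= p) by (apply div_le_of with hbar; lra).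
      assert (p <= 2 * b0) by (apply div_le_of with hbar; lra).
      rewrite (clamp_hi b0 (4 * b0 - b0 - p)) by lra. rewrite (clamp_mid b0 (p - b0)) by lra.
      rewrite Hsp. field. repeat split; lra.
    + intros s Hs. unfold Dfun. set (p := s / hbar).
      assert (Hsp : s = p * hbar) by (unfold p; field; lra). rewrite Hsp in Hs.
      assert (2 * b0 <= p) by (apply div_le_of with hbar; lra).
      assert (p <= 4 * b0) by (apply div_le_of with hbar; lra).
      rewrite (clamp_mid b0 (4 * b0 - b0 - p)) by lra. rewrite (clamp_hi b0 (p - b0)) by lra.
      field. repeat split; lra.
Qed.
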